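(* Let $G$ be a graph on $d+2$ vertices with adjacency matrix $A_G$ having eigenvalues $\lambda_1\geq\lambda_2\geq\dots\geq\lambda_{d+2}$, and let $\overline{B_G}=\lambda_2 I - A_G$. If $w^T\overline{B_G}w\geq0$ for every $w\in\mathbf{1}^\perp$, then there exist a nonzero vector $w\in\mathbf{1}^\perp$ and a real number $\gamma$ with $\overline{B_G}w=\gamma\mathbf{1}$, and $\det(\overline{B_G})=0$.
   Context: Graphs are finite and simple; $\mathbf{1}$ is the all-ones vector and $\mathbf{1}^\perp$ its orthogonal complement. *)

(* Defs.v *)
From HB Require Import structures.
From mathcomp Require Import all_boot all_order all_algebra.
From mathcomp Require Import all_classical all_reals.
Set Implicit Arguments. Unset Strict Implicit. Unset Printing Implicit Defensive.
Import Order.TTheory GRing.Theory Num.Theory.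
Local Open Scope ring_scope.

Definition simple_graph (n : nat) (e : rel 'I_n) : Prop :=
  irreflexive e /\ symmetric e.

Definition adjmx (R : realType) (n : nat) (e : rel 'I_n) : 'M[R]_n :=
  \matrix_(i, j) (e i j)%:R.

Definition ones (R : realType) (n : nat) : 'cV[R]_n := const_mx 1.

Definition in_ones_perp (R : realType) (n : nat) (w : 'cV[R]_n) : Prop :=
  ((ones R n)^T *m w) 0 0 = 0.

Definition qform (R : realType) (n : nat) (B : 'M[R]_n) (w : 'cV[R]_n) : R :=
  (w^T *m B *m w) 0 0.

(* lam lists the eigenvalues of A with multiplicity in nonincreasing order:
   the characteristic polynomial factors as prod_i (X - lam i). *)
Definition sorted_eigenvalues (R : realType) (n : nat) (A : 'M[R]_n)
  (lam : 'I_n -> R) : Prop :=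
  (forall i j : 'I_n, (i <= j)%N -> lam j <= lam i) /\
  char_poly A = \prod_(i < n) ('X - (lam i)%:P).

(* Main.v *)
Require Import Defs.
From HB Require Import structures.
From mathcomp Require Import all_boot all_order all_algebra.
From mathcomp Require Import all_classical all_reals.
Import Order.TTheory GRing.Theory Num.Theory.
Local Open Scope ring_scope.
Lemma char_poly_conj (R : fieldType) n (P A : 'M[R]_n) : P \in unitmx ->
  char_poly (P *m A *m invmx P) = char_poly A.
Proof.
move=> Pu; rewrite /char_poly /char_poly_mx.
have h : map_mx (@polyC R) P *m map_mx polyC (invmx P) = 1%:M.
  by rewrite -map_mxM mulmxV // map_mx1.
have -> : 'X%:M - map_mx polyC (P *m A *m invmx P) =
  map_mx polyC P *m ('X%:M - map_mx polyC A) *m map_mx polyC (invmx P).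
  by rewrite !map_mxM mulmxBr mulmxBl mul_mx_scalar -scalemxAl h scalemx1.
rewrite !det_mulmx !det_map_mx mulrC mulrA -rmorphM /= det_inv mulVf ?mul1r //.
by rewrite -unitfE -unitmxE.
Qed.

Lemma double_eig (R : fieldType) n (A : 'M[R]_n.+1) (l : R) (v : 'rV_n.+1)
  (q : {poly R}) :
  v != 0 -> v *m A = l *: v ->
  char_poly A = ('X - l%:P) * (('X - l%:P) * q) ->
  exists z : 'rV_n.+1, exists c : R,
    z *m A = l *: z + c *: v /\ forall a : R, z != a *: v.
Proof.
move=> vnz vA cpA.
have [k vk] : exists k, v 0 k != 0.
  case: (pickP (fun k => v 0 k != 0)) => [k Hk|H]; first by exists k.
  by case/eqP: vnz; apply/rowP => j; rewrite mxE; move/negbFE/eqP: (H j).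
pose P : 'M[R]_n.+1 := \matrix_(i, j) if i == k then v 0 j else (i == j)%:R.
have detP : \det P = v 0 k.
  rewrite (expand_det_col P k) (bigD1 k) //= big1 ?addr0; last first.
    by move=> i /negPf ik; rewrite mxE ik mul0r.
  rewrite mxE eqxx /cofactor.
  have -> : row' k (col' k P) = 1%:M.
    apply/matrixP => i j; rewrite !mxE eq_sym (negPf (neq_lift k i)) (inj_eq lift_inj).
    by [].
  by rewrite det1 mulr1 -signr_odd addnn odd_double expr0 mulr1.
have Pu : P \in unitmx by rewrite unitmxE unitfE detP.
pose e : 'rV[R]_n.+1 := delta_mx 0 k.
have ekP : e *m P = v.
  by rewrite -rowE; apply/rowP => j; rewrite !mxE eqxx.
pose M := P *m A *m invmx P.
have rowM : e *m M = l *: e.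
  by rewrite /M !mulmxA ekP vA -scalemxAl -ekP mulmxK.
have Mkj : forall j, M k j = l * (k == j)%:R.
  move=> j; have := congr1 (fun X : 'rV_n.+1 => X 0 j) rowM.
  by rewrite /e -rowE !mxE eqxx /= eq_sym; apply: id.
have MP : M *m P = P *m A by rewrite /M mulmxKV.
have cpMA : char_poly M = char_poly A by rewrite /M char_poly_conj.
clearbody M.
pose C := row' k (col' k M).
have cpM : char_poly M = ('X - l%:P) * char_poly C.
  rewrite /char_poly (expand_det_row _ k) (bigD1 k) //= big1 ?addr0.
    rewrite /cofactor row'_col'_char_poly_mx -signr_odd addnn odd_double expr0 mul1r.
    by rewrite !mxE eqxx Mkj eqxx mulr1.
  by move=> j /negPf kj; rewrite !mxE Mkj eq_sym kj mulr0 mulr0n subr0 mul0r.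
have cpC : char_poly C = ('X - l%:P) * q.
  apply: (mulfI (x := 'X - l%:P)); first by rewrite polyXsubC_eq0.
  by rewrite -cpM cpMA.
have : eigenvalue C l.
  by rewrite eigenvalue_root_char cpC /root hornerM hornerXsubC subrr mul0r.
case/eigenvalueP => y yC ynz.
pose y' : 'rV[R]_n.+1 := \row_j (if unlift k j is Some j' then y 0 j' else 0).
have y'k : y' 0 k = 0 by rewrite mxE unlift_none.
have y'l : forall j, y' 0 (lift k j) = y 0 j by move=> j; rewrite mxE liftK.
pose c := (y' *m M) 0 k.
have y'M : y' *m M = l *: y' + c *: e.
  apply/rowP => j; case: (unliftP k j) => [j'|] ->.
    rewrite !mxE (bigD1_ord k) //= y'k mul0r add0r.
    rewrite eq_sym (negPf (neq_lift k j')) mulr0 addr0 liftK.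
    have := congr1 (fun X : 'rV_n => X 0 j') yC; rewrite !mxE => <-.
    by apply: eq_bigr => i _; rewrite y'l !mxE.
  by rewrite !mxE unlift_none mulr0 add0r /= eqxx mulr1 /c mxE.
exists (y' *m P), c; split.
  by rewrite -mulmxA -MP mulmxA y'M mulmxDl -!scalemxAl ekP.
move=> a; apply/eqP => ha.
have : y' = a *: e.
  by rewrite -[y'](mulmxK Pu) ha -ekP scalemxAl mulmxK.
move=> hy; case/eqP: ynz; apply/rowP => j.
have := congr1 (fun X : 'rV_n.+1 => X 0 (lift k j)) hy.
by rewrite y'l !mxE eq_sym (negPf (neq_lift k j)) andbF mulr0 => ->.
Qed.
Set Implicit Arguments. Unset Strict Implicit.
Section Dot.
Variables (R : realFieldType) (n : nat).
Definition dot (x y : 'rV[R]_n) : R := (x *m y^T) 0 0.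
Lemma dotE x y : dot x y = \sum_i x 0 i * y 0 i.
Proof. by rewrite /dot mxE; apply: eq_bigr => i _; rewrite mxE. Qed.
Lemma dotC x y : dot x y = dot y x.
Proof. by rewrite !dotE; apply: eq_bigr => i _; rewrite mulrC. Qed.
Lemma dotDl x y z : dot (x + y) z = dot x z + dot y z.
Proof. by rewrite !dotE -big_split; apply: eq_bigr => i _; rewrite mxE mulrDl. Qed.
Lemma dotNl x z : dot (- x) z = - dot x z.
Proof. by rewrite !dotE -sumrN; apply: eq_bigr => i _; rewrite mxE mulNr. Qed.
Lemma dotBl x y z : dot (x - y) z = dot x z - dot y z.
Proof. by rewrite dotDl dotNl. Qed.
Lemma dotZl a x z : dot (a *: x) z = a * dot x z.
Proof. by rewrite !dotE mulr_sumr; apply: eq_bigr => i _; rewrite mxE mulrA. Qed.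
Lemma dot0l z : dot 0 z = 0.
Proof. by rewrite dotE big1 // => i _; rewrite mxE mul0r. Qed.
Lemma dotDr x y z : dot z (x + y) = dot z x + dot z y.
Proof. by rewrite ![dot z _]dotC dotDl. Qed.
Lemma dotBr x y z : dot z (x - y) = dot z x - dot z y.
Proof. by rewrite ![dot z _]dotC dotBl. Qed.
Lemma dotZr a x z : dot z (a *: x) = a * dot z x.
Proof. by rewrite ![dot z _]dotC dotZl. Qed.
Lemma dot0r z : dot z 0 = 0.
Proof. by rewrite dotC dot0l. Qed.
Lemma dot_ge0 x : 0 <= dot x x.
Proof. by rewrite dotE sumr_ge0 // => i _; rewrite -expr2 sqr_ge0. Qed.
Lemma dot_eq0 x : dot x x = 0 -> x = 0.
Proof.
rewrite dotE => /psumr_eq0P H; apply/rowP => i; rewrite mxE.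
have /eqP := H (fun j _ => sqr_ge0 (x 0 j)) i isT; rewrite mulf_eq0 orbb => /eqP; by [].
Qed.
Lemma dot_sym (B : 'M[R]_n) x y : B^T = B -> dot (x *m B) y = dot x (y *m B).
Proof.
move=> sB; rewrite /dot trmx_mul sB mulmxA //.
Qed.
End Dot.

Theorem lemma4p6 (R : realType) (d : nat) (e : rel 'I_d.+2)
  (lam : 'I_d.+2 -> R) :
  simple_graph e ->
  sorted_eigenvalues (adjmx R e) lam ->
  let B := (lam (inord 1))%:M - adjmx R e in
  (forall w : 'cV[R]_d.+2, in_ones_perp w -> 0 <= qform B w) ->
  (exists w : 'cV[R]_d.+2, w != 0 /\ in_ones_perp w /\
     exists gamma : R, B *m w = gamma *: ones R d.+2)
  /\ \det B = 0.
Proof.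
move=> [eirr esym] [lsort cpA].
set A := adjmx R e in cpA *.
set l2 := lam (inord 1).
move=> B Hpsd.
have sA : A^T = A by apply/matrixP => i j; rewrite !mxE esym.
have sB : B^T = B by rewrite /B linearB /= tr_scalar_mx sA.
have eig : forall i, exists2 u : 'rV[R]_d.+2, u *m A = lam i *: u & u != 0.
  move=> i; apply/eigenvalueP; rewrite eigenvalue_root_char cpA /root horner_prod.
  by rewrite (bigD1 i) //= hornerXsubC subrr mul0r.
have [v vA vnz] := eig (inord 1).
have vB : v *m B = 0 by rewrite mulmxBr mul_mx_scalar vA subrr.
split; last by apply/eqP/det0P; exists v.
pose o : 'rV[R]_d.+2 := const_mx 1.
have fin : forall w : 'rV_d.+2, w != 0 -> dot w o = 0 -> w *m B = 0 ->
    exists w : 'cV[R]_d.+2, w != 0 /\ in_ones_perp w /\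
     exists gamma : R, B *m w = gamma *: ones R d.+2.
  move=> w wnz wo wB; exists w^T; split.
    by apply: contra wnz => /eqP /(congr1 trmx); rewrite trmxK trmx0 => ->.
  split; first by rewrite /in_ones_perp /ones trmx_const -/o -/(dot o w) dotC.
  by exists 0; rewrite -{1}sB -trmx_mul wB trmx0 scale0r.
have [sv|sv] := eqVneq (dot v o) 0; first exact: fin vnz sv vB.
have [l12|l12] := eqVneq (lam ord0) l2.
  have cpA2 : char_poly A = ('X - l2%:P) * (('X - l2%:P) *
      \prod_(i < d) ('X - (lam (lift ord0 (lift ord0 i)))%:P)).
    rewrite cpA big_ord_recl big_ord_recl l12.
    have -> : lift ord0 (ord0 : 'I_d.+1) = inord 1 :> 'I_d.+2.
      by apply/val_inj; rewrite /= inordK.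
    by [].
  have [z [c [zA zind]]] := @double_eig _ _ A l2 v _ vnz vA cpA2.
  have zB : z *m B = - (c *: v).
    by rewrite mulmxBr mul_mx_scalar zA opprD addrA subrr add0r.
  have c0 : c = 0.
    have := dot_sym z v sB; rewrite vB dot0r zB dotNl dotZl => /eqP.
    rewrite oppr_eq0 mulf_eq0 => /orP [/eqP //|/eqP /dot_eq0 v0].
    by rewrite v0 eqxx in vnz.
  apply: (fin (dot z o *: v - dot v o *: z)).
  - apply/eqP => w0; move/eqP: (zind (dot z o / dot v o)); apply.
    move/eqP: w0; rewrite subr_eq0 => /eqP w0.
    by rewrite mulrC -scalerA w0 scalerA mulVf // scale1r.
  - by rewrite dotBl !dotZl mulrC subrr.
  - by rewrite mulmxBl -!scalemxAl vB zB c0 scale0r oppr0 !scaler0 subr0.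
have [u uA unz] := eig ord0.
have l21 : l2 < lam ord0.
  by rewrite lt_neqAle eq_sym l12 /l2 lsort.
have uB : u *m B = (l2 - lam ord0) *: u.
  by rewrite mulmxBr mul_mx_scalar uA scalerBl.
have uv : dot u v = 0.
  have := dot_sym u v sB; rewrite vB dot0r uB dotZl => /eqP.
  rewrite mulf_eq0 subr_eq0 (lt_eqF l21) => /eqP //.
pose w := dot v o *: u - dot u o *: v.
have wB : w *m B = (dot v o * (l2 - lam ord0)) *: u.
  by rewrite mulmxBl -!scalemxAl vB uB scaler0 subr0 scalerA.
have wperp : in_ones_perp w^T.
  rewrite /in_ones_perp /ones trmx_const -/o -/(dot o w) dotC.
  by rewrite dotBl !dotZl mulrC subrr.
have := Hpsd w^T wperp.
have -> : qform B w^T = dot (w *m B) w by rewrite /qform trmxK.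
rewrite wB dotZl dotBr !dotZr uv mulr0 subr0.
have uu : 0 < dot u u.
  rewrite lt_def dot_ge0 andbT; apply/eqP => /dot_eq0 u0.
  by rewrite u0 eqxx in unz.
have sv2 : 0 < dot v o * dot v o by rewrite -expr2 lt_def sqrf_eq0 sv sqr_ge0.
have : (dot v o * (l2 - lam ord0)) * (dot v o * dot u u) < 0.
  rewrite mulrC mulrA pmulr_rlt0 ?subr_lt0 //.
  by rewrite mulrAC pmulr_rgt0 // mulrC.
by move=> /lt_geF ->.
Qed.
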